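(* Let $D$ be a knot diagram and $B$ an over-bridge or under-bridge of $D$. Let $D^\circ_B$ be the knotoid diagram obtained by removing the interior of $B$ from $D$, and $D^\bullet_B$ the virtual knot diagram obtained from $D$ by turning each crossing along $B$ into a virtual crossing. Then $g(D^\circ_B)=g(D^\bullet_B)$.
   Context: A knot diagram is a generic immersion of an oriented circle in $\mathbb{R}^2$ whose only singularities are finitely many transverse double points (crossings), each with over/under information. An over-bridge (resp. under-bridge) of length $k\ge1$ of $D$ is a sub-arc $B$ of $D$, with endpoints not at crossings, whose interior passes through exactly $k$ crossings, passing over (resp. under) at each. A knotoid diagram is a generic immersion $f:[0,1]\to\mathbb{R}^2$ with only transverse double points, each with over/under data; $f(0)$ is the leg and $f(1)$ the head. Its canonical surface $\Sigma_{D^\circ}$: draw $D^\circ$ in $\mathbb{R}^2\times\{0\}\subset\mathbb{R}^3$, orient it, smooth every crossing in the orientation-respecting way, obtaining disjoint embedded circles (Seifert circles) and one embedded interval $J$ (the Seifert interval) with the same endpoints $x,y$ as $D^\circ$; fill the Seifert circles with disjoint disks lying above $\mathbb{R}^2\times\{0\}$, take a band $J\times[0,1]$ lying below $\mathbb{R}^2\times\{0\}$ meeting it in $J\times\{0\}$, and attach a half-twisted band at each original crossing. The genus $g(D^\circ)$ is the genus of this surface (which has one boundary component, $D^\circ\cup J\times\{1\}\cup\{x,y\}\times[0,1]$). A virtual knot diagram is a generic immersion of a circle in $\mathbb{R}^2$ with transverse double points, some of which (real crossings) carry over/under data and the others (virtual crossings) do not. Its Gauss diagram is the oriented circle (the parametrizing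 circle) with one chord for each real crossing joining its two preimages, oriented from the over-branch to the under-branch and signed by the crossing sign; virtual crossings give no chords. A Gauss diagram is an oriented circle with $n$ signed oriented chords with $2n$ distinct endpoints; its canonical surface $\Sigma_G$ is obtained from the annulus $S^1\times[0,1]$ by attaching, for each chord, a band to small neighborhoods of its two endpoints in $S^1\times\{0\}$ so that the result is oriented, and then capping every boundary component except $S^1\times\{1\}$ with a disk. The genus $g(D^\bullet)$ of a virtual knot diagram is the genus of the canonical surface of its Gauss diagram. *)

(* Defs.v *)
From mathcomp Require Import all_boot all_order all_algebra.
Set Implicit Arguments. Unset Strict Implicit. Unset Printing Implicit Defensive.

(* A passage of the curve through a crossing: (crossing label, over?) *)
Definition entry := (nat * bool)%type.
(* A Gauss code: the passages listed in the order met along the oriented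
   curve (cyclically for a closed curve, from leg to head for a knotoid). *)
Definition gcode := seq entry.

Definition mate (x : entry) : entry := (x.1, ~~ x.2).

Definition wf_code (s : gcode) : bool := uniq s && all (fun x => mate x \in s) s.

Definition partner_pos (s : gcode) (q : nat) : nat :=
  index (mate (nth (0%N, false) s q)) s.

Definition ncycles (N : nat) (f : nat -> nat) : nat :=
  count (fun i => all (fun j => i <= j) (traject f i N)) (iota 0 N).

(* sgn c = true iff crossing c is positive.  A ray at a crossing is
   (passage q, outgoing?).  rho = next ray counterclockwise around the
   crossing (positive crossing, over strand pointing east: under strand
   points north). *)
Definition rho (s : gcode) (sgn : nat -> bool) (r : nat * bool) : nat * bool :=
  let x := nth (0%N, false) s r.1 in
  (partner_pos s r.1, r.2 == (x.2 == sgn x.1)).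

(* darts: 2a = arc a (from passage a to a+1 mod L) traversed forwards,
   2a+1 = arc a traversed backwards; face-tracing permutation *)
Definition face_next (s : gcode) (sgn : nat -> bool) (d : nat) : nat :=
  let L := size s in
  let a := d./2 in
  let r := if odd d then (a, true) else (a.+1 %% L, false) in
  let r' := rho s sgn r in
  if r'.2 then r'.1.*2 else (((r'.1 + L).-1 %% L).*2).+1.

(* the 4-valent graph with the rotation system given by the signed code is
   cellularly embedded in the sphere: V - E + F = 2 with V = L/2, E = L *)
Definition planar (s : gcode) (sgn : nat -> bool) : bool :=
  (size s == 0) || (ncycles (size s).*2 (face_next s sgn) == (size s)./2 + 2).

Definition knot_diagram (s : gcode) (sgn : nat -> bool) : bool :=
  wf_code s && planar s sgn.

(* The sub-arc B starting just before passage i and passing through the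
   k consecutive passages i, i+1, ..., i+k-1 (mod size s). *)
Definition bridge_passages (s : gcode) (i k : nat) : gcode := take k (rot i s).

Definition is_over_bridge (s : gcode) (i k : nat) : bool :=
  [&& 0 < k, k <= size s, i < size s & all (fun x => x.2) (bridge_passages s i k)].
Definition is_under_bridge (s : gcode) (i k : nat) : bool :=
  [&& 0 < k, k <= size s, i < size s & all (fun x => ~~ x.2) (bridge_passages s i k)].

Definition off_bridge (s : gcode) (i k : nat) (x : entry) : bool :=
  x.1 \notin map fst (bridge_passages s i k).

(* D°_B: remove the interior of B; the knotoid runs from the terminal
   endpoint of B (leg) to the initial endpoint of B (head); the crossings
   along B disappear *)
Definition knotoid_code (s : gcode) (i k : nat) : gcode :=
  filter (off_bridge s i k) (drop k (rot i s)).

(* D•_B: crossings along B become virtual; its Gauss diagram is the code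
   of the remaining real crossings (signs/chord data inherited from D) *)
Definition virtual_code (s : gcode) (i k : nat) : gcode :=
  filter (off_bridge s i k) s.

Definition genus_from_euler (chi : int) (b : nat) : int :=
  ((2 - chi - b%:Z) %/ 2)%Z.

(* Knotoid v with L passages: arcs 0..L, arc j runs from passage j-1
   (or the leg) to passage j (or the head).  Oriented smoothing: arc j
   (j < L) continues into arc (partner j)+1.  Closing arc L to arc 0 turns
   the Seifert interval into one extra cycle, so the Seifert circles are
   the remaining cycles. *)
Definition knotoid_seifert_next (v : gcode) (j : nat) : nat :=
  if j < size v then (partner_pos v j).+1 else 0.
Definition knotoid_seifert_circles (v : gcode) : nat :=
  (ncycles (size v).+1 (knotoid_seifert_next v)).-1.

(* Sigma_{D°}: Seifert disks + one band along J + one band per crossing;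
   one boundary component *)
Definition knotoid_genus (v : gcode) : int :=
  genus_from_euler ((knotoid_seifert_circles v)%:Z + 1 - ((size v)./2)%:Z) 1.

(* Gauss diagram w (cyclic, L endpoints): boundary components of the
   annulus-with-bands on the S^1 x {0} side; the segment from endpoint a to
   a+1 continues, through the band at endpoint a+1, into the segment
   starting at its partner *)
Definition gauss_inner_boundaries (w : gcode) : nat :=
  ncycles (size w) (fun a => partner_pos w (a.+1 %% size w)).

(* Sigma_G: annulus (chi = 0) + one band per chord + caps on the inner
   boundary components; one boundary component S^1 x {1} *)
Definition gauss_genus (w : gcode) : int :=
  genus_from_euler ((gauss_inner_boundaries w)%:Z - ((size w)./2)%:Z) 1.

(* Main.v *)
Require Import Defs.
From mathcomp Require Import all_boot all_order all_algebra.
From mathcomp Require Import zify.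


Set Implicit Arguments. Unset Strict Implicit.

Section Orbits.
Variable N : nat.
Variable f : nat -> nat.
Hypothesis fin : forall x, x < N -> f x < N.

Lemma iter_lt n x : x < N -> iter n f x < N.
Proof. by move=> xN; elim: n => //= n IH; apply: fin. Qed.

Lemma iter_in_traject x n : x < N -> iter n f x \in traject f x N.
Proof.
move=> xN; have: looping f x N.
  rewrite -[looping _ _ _]negbK -looping_uniq; apply/negP => U.
  have S : {subset traject f x N.+1 <= iota 0 N}.
    by move=> y /trajectP [m _ ->]; rewrite mem_iota add0n iter_lt.
  by have := uniq_leq_size U S; rewrite size_traject size_iota ltnn.
by move/loopingP.
Qed.

Lemma all_trajectP (P : pred nat) x : x < N ->
  reflect (forall n, P (iter n f x)) (all P (traject f x N)).
Proof.
move=> xN; apply: (iffP allP).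
  by move=> H n; apply: H; apply: iter_in_traject.
by move=> H y /trajectP [m _ ->].
Qed.

Lemma reachP x y : x < N -> reflect (exists n, iter n f x = y) (y \in traject f x N).
Proof.
move=> xN; apply: (iffP idP).
  by move=> /trajectP [m _ ->]; exists m.
by move=> [n <-]; apply: iter_in_traject.
Qed.

End Orbits.




Lemma iter_inj N f (fin : forall x, x < N -> f x < N)
  (finj : {in [pred x | x < N] &, injective f}) m u v :
  u < N -> v < N -> iter m f u = iter m f v -> u = v.
Proof.
move=> uN vN; elim: m => //= m IH E; apply: IH.
by apply: finj => //; rewrite inE iter_lt.
Qed.

Lemma reach_sym N f (fin : forall x, x < N -> f x < N)
  (finj : {in [pred x | x < N] &, injective f}) x n :
  x < N -> exists m, iter m f (iter n f x) = x.
Proof.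
move=> xN.
have /trajectP [m mN E] := @iter_in_traject N f fin x N xN.
have Hp : iter (N - m) f x = x.
  apply: (@iter_inj N f fin finj m); rewrite ?(@iter_lt N f fin) //.
  by rewrite -iterD subnKC ?E // ltnW.

have Hpk : forall k, iter ((N - m) * k) f x = x.
  elim=> [|k IH]; first by rewrite muln0.
  by rewrite mulnS iterD IH Hp.
exists ((N - m) * n - n); rewrite -iterD subnK ?Hpk //.
by rewrite leq_pmull // subn_gt0.
Qed.

Lemma count_one N (P : pred nat) y0 : y0 < N -> P y0 ->
  (forall y y', y < N -> y' < N -> P y -> P y' -> y = y') ->
  count P (iota 0 N) = 1.
Proof.
move=> y0N Py0 U.
rewrite (@eq_in_count _ _ (pred1 y0)).
  by rewrite count_uniq_mem ?iota_uniq // mem_iota y0N.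
move=> y; rewrite mem_iota add0n /= => yN.
apply/idP/eqP => [Py|->//]; exact: U.
Qed.

Lemma count_bij N (R1 R2 : pred nat) (C : nat -> nat -> bool) :
  (forall x, x < N -> R1 x -> count (fun y => R2 y && C x y) (iota 0 N) = 1) ->
  (forall y, y < N -> R2 y -> count (fun x => R1 x && C x y) (iota 0 N) = 1) ->
  count R1 (iota 0 N) = count R2 (iota 0 N).
Proof.
move=> H1 H2.
rewrite -!sum1_count.
transitivity (\sum_(x <- iota 0 N | R1 x) \sum_(y <- iota 0 N | R2 y) (if C x y then 1 else 0)).
  rewrite big_seq_cond [RHS]big_seq_cond; apply: eq_bigr => x /andP [].
  rewrite mem_iota add0n => xN R1x.
  by rewrite -big_mkcondr sum1_count H1.
rewrite exchange_big /=.
rewrite big_seq_cond [RHS]big_seq_cond; apply: eq_bigr => y /andP [].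
rewrite mem_iota add0n => yN R2y.
by rewrite -big_mkcondr sum1_count H2.
Qed.




Definition ismin N (f : nat -> nat) i := all (fun j => i <= j) (traject f i N).

Lemma ncyclesE N f : ncycles N f = count (ismin N f) (iota 0 N).
Proof. by []. Qed.

Lemma ismin_iter N f (fin : forall x, x < N -> f x < N) a n :
  a < N -> ismin N f a -> a <= iter n f a.
Proof. by move=> aN /(all_trajectP fin _ aN); apply. Qed.

Lemma exists_min N f (fin : forall x, x < N -> f x < N) a : a < N ->
  exists m, [/\ m < N, ismin N f m & exists n, iter n f a = m].
Proof.
move=> aN.
have exP : exists z, z \in traject f a N by exists a; apply: (@iter_in_traject N f fin a 0 aN).
case: (ex_minnP exP) => m /(reachP fin _ aN) [n En] Hmin.
have mN : m < N by rewrite -En iter_lt.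
exists m; split => //; last by exists n.
apply/(all_trajectP fin _ mN) => k; apply: Hmin.
by apply/(reachP fin _ aN); exists (k + n); rewrite iterD En.
Qed.

Lemma antisym_min N f (fin : forall x, x < N -> f x < N) y y' :
  y < N -> y' < N -> ismin N f y -> ismin N f y' ->
  (exists n, iter n f y = y') -> (exists n, iter n f y' = y) -> y = y'.
Proof.
move=> yN y'N my my' [a Ea] [b Eb]; apply/eqP; rewrite eqn_leq.
apply/andP; split; first by rewrite -Ea (ismin_iter fin).
by rewrite -Eb (ismin_iter fin).
Qed.

Lemma surj_in N h (hin : forall x, x < N -> h x < N)
  (hinj : {in [pred x | x < N] &, injective h}) y : y < N ->
  exists2 z, z < N & h z = y.
Proof.
move=> yN.
have U : uniq (map h (iota 0 N)).
  rewrite map_inj_in_uniq ?iota_uniq // => a b; rewrite !mem_iota !add0n => aN bN.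
  by apply: hinj.
have S : {subset map h (iota 0 N) <= iota 0 N}.
  by move=> w /mapP [a]; rewrite !mem_iota !add0n => aN ->; rewrite hin.
have := uniq_min_size U S; rewrite size_map leqnn => /(_ isT) [_ E].
have : y \in map h (iota 0 N) by rewrite E mem_iota add0n.
by case/mapP => z; rewrite mem_iota add0n => zN Ez; exists z.
Qed.

Lemma conj_ncycles N f g h
  (fin : forall x, x < N -> f x < N) (gin : forall x, x < N -> g x < N)
  (hin : forall x, x < N -> h x < N)
  (finj : {in [pred x | x < N] &, injective f})
  (hinj : {in [pred x | x < N] &, injective h})
  (hc : forall x, x < N -> h (g x) = f (h x)) :
  ncycles N g = ncycles N f.
Proof.
have ic : forall n x, x < N -> iter n f (h x) = h (iter n g x).
  move=> n x xN; elim: n => //= n ->; by rewrite hc ?(@iter_lt N g gin).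
have rg : forall x x', x < N -> x' < N -> (exists n, iter n f (h x) = h x') ->
    exists n, iter n g x = x'.
  move=> x x' xN x'N [n E]; exists n; apply: hinj; rewrite ?inE ?(@iter_lt N g gin) //.
  by rewrite -ic.
rewrite !ncyclesE.
apply: (@count_bij N _ _ (fun x y => y \in traject f (h x) N)).
- move=> x xN mx.
  have hxN := hin x xN.
  have [y0 [y0N my0 [n0 E0]]] := exists_min fin hxN.
  apply: (@count_one N _ y0 y0N).
    by rewrite my0 /=; apply/(reachP fin _ hxN); exists n0.
  move=> y y' yN y'N /andP [my /(reachP fin _ hxN) [a Ea]] /andP [my' /(reachP fin _ hxN) [b Eb]].
  apply: (antisym_min fin yN y'N my my').
    have [c Ec] := reach_sym fin finj a hxN.
    by exists (b + c); rewrite iterD -Ea Ec Eb.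
  have [c Ec] := reach_sym fin finj b hxN.
  by exists (a + c); rewrite iterD -Eb Ec Ea.
- move=> y yN my.
  have [z zN Ez] := surj_in hin hinj yN.
  have [x0 [x0N mx0 [n0 E0]]] := exists_min gin zN.
  apply: (@count_one N _ x0 x0N).
    rewrite mx0 /=; apply/(reachP fin _ (hin _ x0N)).
    have := reach_sym fin finj n0 (hin _ zN).
    by rewrite ic // E0 Ez.
  move=> x x' xN x'N /andP [mx /(reachP fin _ (hin _ xN)) [a Ea]]
                    /andP [mx' /(reachP fin _ (hin _ x'N)) [b Eb]].
  apply: (antisym_min gin xN x'N mx mx').
    apply: rg => //.
    have [c Ec] := reach_sym fin finj b (hin _ x'N).
    by exists (c + a); rewrite iterD Ea -Eb.
  apply: rg => //.
  have [c Ec] := reach_sym fin finj a (hin _ xN).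
  by exists (c + b); rewrite iterD Eb -Ea.
Qed.




Lemma notmin L (q : nat -> nat) : 0 < L ->
  ismin L.+1 (fun j => if j < L then q j else 0) L = false.
Proof. case: L => [|L] // _. by rewrite /ismin /= !ltnn ltnSn /=. Qed.

Lemma insert_ncycles L (q : nat -> nat) : 0 < L -> (forall j, j < L -> q j <= L) ->
  ncycles L.+1 (fun j => if j < L then q j else 0) =
  ncycles L (fun j => if q j < L then q j else 0).
Proof.
move=> L0 qL.
set f := fun j => _; set g := fun j => _.
have fin : forall x, x < L.+1 -> f x < L.+1.
  by move=> x xL; rewrite /f; case: ifP => // /qL.
have gin : forall x, x < L -> g x < L.
  by move=> x xL; rewrite /g; case: ifP.
rewrite !ncyclesE (_ : iota 0 L.+1 = iota 0 L ++ [:: L]); last by rewrite -addn1 iotaD.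
rewrite count_cat /=.
have -> : ismin L.+1 f L = false by rewrite /f notmin.
rewrite /= !addn0; apply: eq_in_count => i; rewrite mem_iota add0n => iL.
have iL1 : i < L.+1 by apply: ltnW.
have fE : forall y, y < L -> f y = q y by move=> y yL; rewrite /f yL.
have fL : f L = 0 by rewrite /f ltnn.
have gE : forall y, g y = if q y < L then q y else 0 by [].
apply/idP/idP.
- move=> /(all_trajectP fin _ iL1) Hf; apply/(all_trajectP gin _ iL) => n.
  have : exists m, iter m f i = iter n g i.
    elim: n => [|n [m Em]]; first by exists 0.
    have yL : iter n g i < L by apply: iter_lt.
    have qy := qL _ yL.
    rewrite iterS gE.
    case: ifP => qyL.
      by exists m.+1; rewrite iterS Em fE.
    exists m.+2; rewrite !iterS Em (fE _ yL).
    have -> : q (iter n g i) = L by lia.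
    by [].
  by case=> m <-.
- move=> /(all_trajectP gin _ iL) Hg; apply/(all_trajectP fin _ iL1) => n.
  have : (iter n f i < L -> exists m, iter m g i = iter n f i) /\
         (iter n f i = L -> exists m, iter m g i = 0).
    elim: n => [|n [IH1 IH2]]; first by split => [_|/= E]; [exists 0 | lia].
    have zL : iter n f i < L.+1 by apply: iter_lt.
    rewrite iterS.
    case: (ltnP (iter n f i) L) => zl.
      have [m Em] := IH1 zl.
      have qz := qL _ zl.
      rewrite fE //.
      split => H.
        by exists m.+1; rewrite iterS Em gE H.
      by exists m.+1; rewrite iterS Em gE H ltnn.
    have zE : iter n f i = L by lia.
    rewrite zE fL.
    split => [_|H]; [exact: IH2 | lia].
  case=> H1 _.
  have zL : iter n f i < L.+1 by apply: iter_lt.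
  case: (ltnP (iter n f i) L) => zl.
    by have [m <-] := H1 zl.
  by apply: leq_trans (ltnW iL) zl.
Qed.




Notation x0 := (0%N, false).

Lemma mateK x : mate (mate x) = x.
Proof. by case: x => a b; rewrite /mate /= negbK. Qed.

Section Partner.
Variable u : gcode.
Hypothesis wu : wf_code u.

Lemma pp_lt b : b < size u -> partner_pos u b < size u.
Proof.
move=> bL; case/andP: wu => _ /allP H.
by rewrite /partner_pos index_mem H // mem_nth.
Qed.

Lemma pp_nth b : b < size u -> nth x0 u (partner_pos u b) = mate (nth x0 u b).
Proof.
move=> bL; case/andP: wu => _ /allP H.
by rewrite /partner_pos nth_index // H // mem_nth.
Qed.

Lemma pp_inv b : b < size u -> partner_pos u (partner_pos u b) = b.
Proof.
move=> bL; rewrite {1}/partner_pos pp_nth // mateK index_uniq //.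
by case/andP: wu.
Qed.

End Partner.

Lemma arith1 n r b : r <= n -> b < n -> n - r <= b -> b - (n - r) < r /\ b + r = (b - (n - r)) + n.
Proof. move=> *; lia. Qed.

Lemma arith2 p r L : 0 < L -> p.+1 + r + L.-1 = p + r + L.
Proof. move=> *; lia. Qed.
Lemma arith3 x r L : 0 < L -> x + r + L.-1 + 1 = x + r + L.
Proof. move=> *; lia. Qed.

Lemma nth_rot (w : gcode) r b : r <= size w -> b < size w ->
  nth x0 (rot r w) b = nth x0 w ((b + r) %% size w).
Proof.
move=> rL bL; rewrite /rot nth_cat size_drop.
case: ltnP => H.
  rewrite nth_drop modn_small; first by rewrite addnC.
  by rewrite addnC -ltn_subRL.
have [H2 H3] := arith1 rL bL H.
rewrite nth_take //.
congr nth.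
rewrite H3 modnDr modn_small //.
exact: leq_trans H2 rL.
Qed.

Lemma wf_rot (w : gcode) r : wf_code w -> wf_code (rot r w).
Proof.
case/andP => U /allP A; apply/andP; split; first by rewrite rot_uniq.
by apply/allP => x; rewrite !mem_rot => /A.
Qed.

Lemma rot_pp (w : gcode) r b : wf_code w -> r <= size w -> b < size w ->
  (partner_pos (rot r w) b + r) %% size w = partner_pos w ((b + r) %% size w).
Proof.
move=> ww rL bL.
have wv := wf_rot r ww.
have L0 : 0 < size w := leq_ltn_trans (leq0n b) bL.
have bL' : b < size (rot r w) by rewrite size_rot.
have dL := pp_lt wv bL'; rewrite size_rot in dL.
have brL : (b + r) %% size w < size w by rewrite ltn_pmod.
have cL := pp_lt ww brL.
apply/eqP; rewrite -(nth_uniq x0 _ cL); last by case/andP: ww.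
  by rewrite pp_nth // -nth_rot // -nth_rot // pp_nth.
by rewrite ltn_pmod.
Qed.

Lemma ncycles_pos N f : 0 < N -> 0 < ncycles N f.
Proof.
case: N => // N _; rewrite /ncycles /=.
by rewrite (@eq_all _ _ predT) ?all_predT.
Qed.

Lemma genus_rot (w : gcode) r : wf_code w -> r <= size w ->
  knotoid_genus (rot r w) = gauss_genus w.
Proof.
move=> ww rL.
have wv := wf_rot r ww.
case: (posnP (size w)) => L0.
  move/size0nil: L0 => ->; have -> : rot r [::] = [::] :> gcode by case: (r).
  by vm_compute.
set L := size w.
set v := rot r w.
have Lv : size v = L by rewrite size_rot.
pose q j := (partner_pos v j).+1.
have qL : forall j, j < L -> q j <= L by move=> j jL; rewrite /q; have := @pp_lt v wv j; rewrite Lv; apply.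
have E1 : ncycles L.+1 (knotoid_seifert_next v) =
          ncycles L (fun j => if q j < L then q j else 0).
  rewrite -(insert_ncycles L0 qL).
  by rewrite /knotoid_seifert_next Lv.
pose G a := partner_pos w (a.+1 %% L).
pose h j := (j + r + L.-1) %% L.
have wL : forall b, b < L -> partner_pos w b < L by move=> b bL; apply: pp_lt.
have vL : forall b, b < L -> partner_pos v b < L.
  by move=> b bL; rewrite -Lv; apply: pp_lt => //; rewrite Lv.
have modS : forall a, a %% L < L by move=> a; rewrite ltn_pmod.
have E2 : ncycles L (fun j => if q j < L then q j else 0) = ncycles L G.
  apply: (@conj_ncycles L G _ h).
  - by move=> x _; apply: wL.
  - by move=> x _; case: ifP.
  - by move=> x _; apply: modS.
  - move=> a b; rewrite !inE => aL bL E.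
    have : partner_pos w (partner_pos w (a.+1 %% L)) = partner_pos w (partner_pos w (b.+1 %% L)).
      by rewrite /G in E; rewrite E.
    rewrite !pp_inv // => /eqP.
    by rewrite -[a.+1]addn1 -[b.+1]addn1 eqn_modDr !modn_small // => /eqP.
  - move=> a b; rewrite !inE => aL bL /eqP.
    by rewrite /h -!addnA eqn_modDr !modn_small // => /eqP.
  - move=> x xL.
    have -> : h (if q x < L then q x else 0) = (partner_pos v x + r) %% L.
      rewrite /h /q; case: ifP => H.
        by rewrite arith2 // modnDr.
      have pE : partner_pos v x = L.-1.
        have := qL x xL; rewrite /q; move: H; rewrite /q; lia.
      by rewrite pE add0n addnC.
    rewrite rot_pp // /G; congr partner_pos.
    by rewrite /h -addn1 modnDml arith3 // modnDr.
rewrite /knotoid_genus /gauss_genus /knotoid_seifert_circles /gauss_inner_boundaries -/L Lv E1 E2.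
have cpos := ncycles_pos G L0.
move: (ncycles L G) cpos => c cpos.
congr genus_from_euler.
case: c cpos => // c _ /=.
lia.
Qed.



Lemma filter_rot_gen (Q : pred entry) (a b : seq entry) :
  filter Q (b ++ a) = rot (size (filter Q a)) (filter Q (a ++ b)).
Proof. by rewrite !filter_cat rot_size_cat. Qed.

Theorem mainTheorem3 (s : gcode) (sgn : nat -> bool) (i k : nat) :
  knot_diagram s sgn ->
  is_over_bridge s i k || is_under_bridge s i k ->
  knotoid_genus (knotoid_code s i k) = gauss_genus (virtual_code s i k).
Proof.
case/andP => ws _ _.
set P := off_bridge s i k.
have Hnil : filter P (take k (rot i s)) = [::].
  rewrite (@eq_in_filter _ P pred0) ?filter_pred0 // => x xin.
  by rewrite /P /off_bridge /bridge_passages map_f.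
have Hv : knotoid_code s i k = filter P (rot i s).
  by rewrite /knotoid_code -/P -{2}(cat_take_drop k (rot i s)) filter_cat Hnil.
have Hr : filter P (rot i s) = rot (size (filter P (take i s))) (filter P s).
  by rewrite [rot i s]/rot filter_rot_gen cat_take_drop.
rewrite Hv Hr /virtual_code -/P.
apply: genus_rot.
  case/andP: ws => U /allP A; apply/andP; split; first by rewrite filter_uniq.
  apply/allP => x; rewrite !mem_filter => /andP [Px xs].
  by rewrite A // andbT.
by rewrite -{2}(cat_take_drop i s) filter_cat size_cat leq_addr.
Qed.
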